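(* Let $A, C, D$ be binary random variables, with $A$ taking values $a,\overline{a}$, $C$ taking values $c,\overline{c}$, $D$ taking values $d,\overline{d}$, and let $Y$ be a real random variable with finite expectation. Suppose the joint distribution factorizes as \[ p(A,C,D,Y)=p(C)\,p(D\mid C)\,p(A\mid C)\,p(Y\mid A,C), \] and that every event $\{A=x, C=y, D=z\}$ has positive probability. Let $p(c)=0.5$, $p(d\mid c)=p(\overline{d}\mid\overline{c})\ge 0.5$ and $p(\overline{a}\mid\overline{c})\ge p(a\mid c)\ge 0.5$. If \[ E[Y|a,c]-E[Y|a,\overline{c}]\ \le\ E[Y|\overline{a},\overline{c}]-E[Y|\overline{a},c]\ \le\ 0, \] then $RD_{crude}\le RD_{true}$ and $RD_{obs}\le RD_{true}$.
   Context: $RD_{true}=E[Y|a,c]p(c)+E[Y|a,\overline{c}]p(\overline{c})-E[Y|\overline{a},c]p(c)-E[Y|\overline{a},\overline{c}]p(\overline{c})$; $RD_{crude}=E[Y|a]-E[Y|\overline{a}]$; $RD_{obs}=E[Y|a,d]p(d)+E[Y|a,\overline{d}]p(\overline{d})-E[Y|\overline{a},d]p(d)-E[Y|\overline{a},\overline{d}]p(\overline{d})$. *)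

(* Defs.v *)
From HB Require Import structures.
From mathcomp Require Import all_boot all_order all_algebra.
From mathcomp Require Import all_classical all_reals all_analysis.
Set Implicit Arguments. Unset Strict Implicit. Unset Printing Implicit Defensive.
Import Order.TTheory GRing.Theory Num.Theory.
Local Open Scope classical_set_scope.
Local Open Scope ring_scope.

Definition pr d (T : measurableType d) (R : realType) (P : probability T R)
  (S : set T) : R := fine (P S).

Definition condE d (T : measurableType d) (R : realType) (P : probability T R)
  (Y : T -> R) (S : set T) : R :=
  fine (\int[P]_(t in S) (Y t)%:E) / pr P S.

Definition cpr d (T : measurableType d) (R : realType) (P : probability T R)
  (S B : set T) : R := pr P (S `&` B) / pr P B.

(* Events {X = x}; the value [true] encodes x, [false] encodes \overline{x}. *)
Definition ev (T : Type) (X : T -> bool) (x : bool) : set T := [set t | X t = x].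

Definition RD_true d (T : measurableType d) (R : realType) (P : probability T R)
  (A C : T -> bool) (Y : T -> R) : R :=
  condE P Y (ev A true `&` ev C true) * pr P (ev C true)
  + condE P Y (ev A true `&` ev C false) * pr P (ev C false)
  - condE P Y (ev A false `&` ev C true) * pr P (ev C true)
  - condE P Y (ev A false `&` ev C false) * pr P (ev C false).

Definition RD_crude d (T : measurableType d) (R : realType) (P : probability T R)
  (A : T -> bool) (Y : T -> R) : R :=
  condE P Y (ev A true) - condE P Y (ev A false).

(* Main.v *)
Require Import Defs.
From HB Require Import structures.
From mathcomp Require Import all_boot all_order all_algebra.
From mathcomp Require Import all_classical all_reals all_analysis.
From mathcomp Require Import measurable_realfun.
From mathcomp Require Import ring lra.
Set Implicit Arguments. Unset Strict Implicit.
Import Order.TTheory GRing.Theory Num.Theory.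
Local Open Scope classical_set_scope.
Local Open Scope ring_scope.

Lemma alg_crude (R : realFieldType) (al be m1 m2 m3 m4 : R) :
  0 < al -> al < 1 -> 0 < be -> be < 1 -> 2^-1 <= al -> al <= be ->
  m1 - m2 <= m4 - m3 -> m4 - m3 <= 0 ->
  (al* m1 + (1-be)* m2)/(al + (1-be)) - ((1-al)* m3 + be* m4)/((1-al)+be)
  <= (m1+m2-m3-m4)/2.
Proof.
move=> a0 a1 b0 b1 ha hab h1 h2.
have D1 : 0 < al + (1 - be) by lra.
have D2 : 0 < (1 - al) + be by lra.
have E : (al* m1 + (1-be)* m2)/(al + (1-be)) - ((1-al)* m3 + be* m4)/((1-al)+be)
  - (m1+m2-m3-m4)/2 = (al+be-1)/2 * ((m1-m2)/(al+(1-be)) - (m4-m3)/((1-al)+be)).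
  by field; apply/andP; split; rewrite gt_eqF.
have : (m1-m2)/(al+(1-be)) <= (m4-m3)/((1-al)+be).
  rewrite ler_pdivrMr // mulrAC ler_pdivlMr //.
  nra.
have : 0 <= (al+be-1)/2 by lra.
nra.
Qed.

Lemma alg_obs (R : realFieldType) (al be q m1 m2 m3 m4 : R) :
  0 < al -> al < 1 -> 0 < be -> be < 1 -> 0 < q -> q < 1 ->
  2^-1 <= al -> al <= be -> 2^-1 <= q ->
  m1 - m2 <= m4 - m3 -> m4 - m3 <= 0 ->
  (q * al * m1 + (1-q) * (1-be) * m2) / (q * al + (1-q) * (1-be)) * 2^-1
  + ((1-q) * al * m1 + q * (1-be) * m2) / ((1-q) * al + q * (1-be)) * 2^-1
  - (q * (1-al) * m3 + (1-q) * be * m4) / (q * (1-al) + (1-q) * be) * 2^-1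
  - ((1-q) * (1-al) * m3 + q * be * m4) / ((1-q) * (1-al) + q * be) * 2^-1
  <= (m1+m2-m3-m4)/2.
Proof.
move=> a0 a1 b0 b1 q0 q1 ha hab hq h1 h2.
set K := q / (1 - q) + (1 - q) / q.
set r1 := al / (1 - be).
set r2 := be / (1 - al).
pose h (r : R) := 2 * (r^+2 - 1) / (r^+2 + K * r + 1).
have K0 : 0 < K.
  by rewrite /K addr_gt0 // divr_gt0 // subr_gt0.
have r10 : 0 < r1 by rewrite divr_gt0 // subr_gt0.
have r20 : 0 < r2 by rewrite divr_gt0 // subr_gt0.
have d0 r : 0 < r -> 0 < r^+2 + K * r + 1.
  move=> rp; rewrite addr_gt0 // addr_gt0 // ?exprn_gt0 // mulr_gt0 //.
have E : 
  (q * al * m1 + (1-q) * (1-be) * m2) / (q * al + (1-q) * (1-be)) * 2^-1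
  + ((1-q) * al * m1 + q * (1-be) * m2) / ((1-q) * al + q * (1-be)) * 2^-1
  - (q * (1-al) * m3 + (1-q) * be * m4) / (q * (1-al) + (1-q) * be) * 2^-1
  - ((1-q) * (1-al) * m3 + q * be * m4) / ((1-q) * (1-al) + q * be) * 2^-1
  - (m1+m2-m3-m4)/2 = ((m1 - m2) * h r1 - (m4 - m3) * h r2) / 4.
  rewrite /h /r1 /r2 /K.
  field.
  have w0 : 0 < (1 - q) * q by apply: mulr_gt0; lra.
  have a2 : 0 < 1 - al by lra.
  have b2 : 0 < 1 - be by lra.
  have q2 : 0 < 1 - q by lra.
  have z0 : 0 < q * q + (1 - q) * (1 - q) by nra.
  have t1 : 0 < q * al by nra.
  have t2 : 0 < (1 - q) * (1 - be) by nra.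
  have t3 : 0 < (1 - q) * al by nra.
  have t4 : 0 < q * (1 - be) by nra.
  have t5 : 0 < q * (1 - al) by nra.
  have t6 : 0 < (1 - q) * be by nra.
  have t7 : 0 < (1 - q) * (1 - al) by nra.
  have t8 : 0 < q * be by nra.
  have c1 : 0 < be ^+ 2 * ((1 - q) * q) + (q * q + (1 - q) * (1 - q)) * be * (1 - al) +
      (1 - al) * ((1 - q) * q * (1 - al)).
    rewrite addr_gt0 // ?addr_gt0 // ?mulr_gt0 // ?exprn_gt0 //.
  have c2 : 0 < al ^+ 2 * ((1 - q) * q) + (q * q + (1 - q) * (1 - q)) * al * (1 - be) +
      (1 - be) * ((1 - q) * q * (1 - be)).
    rewrite addr_gt0 // ?addr_gt0 // ?mulr_gt0 // ?exprn_gt0 //.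
  by rewrite !gt_eqF // ?addr_gt0.
have hr1 : 0 <= h r1.
  have : 1 <= r1 by rewrite /r1 ler_pdivlMr ?mul1r ?subr_gt0; lra.
  move=> H1; rewrite /h; apply: divr_ge0; last exact/ltW/d0.
  apply: mulr_ge0 => //; rewrite subr_ge0; nra.
have r12 : r2 <= r1.
  rewrite /r1 /r2 ler_pdivrMr ?subr_gt0 // mulrAC ler_pdivlMr ?subr_gt0 //.
  nra.
have hr12 : h r2 <= h r1.
  rewrite -subr_ge0.
  have -> : h r1 - h r2 = 2 * (r1 - r2) * (K * r1 * r2 + 2 * (r1 + r2) + K)
     / ((r1^+2 + K * r1 + 1) * (r2^+2 + K * r2 + 1)).
    rewrite /h; field.
    by rewrite !gt_eqF ?d0.
  apply: divr_ge0; last by apply: ltW; apply: mulr_gt0; apply: d0.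
  apply: mulr_ge0; first by apply: mulr_ge0 => //; rewrite subr_ge0.
  have := mulr_gt0 (mulr_gt0 K0 r10) r20; lra.
rewrite -subr_le0 E.
have H : (m1 - m2) * h r1 <= (m4 - m3) * h r2 by nra.
lra.
Qed.
Local Open Scope ereal_scope.
Lemma int_restr d (T : measurableType d) (R : realType)
  (mu : {measure set T -> \bar R}) (S : set T) (mS : measurable S)
  (f : T -> \bar R) : measurable_fun [set: T] f -> (forall x, (0 <= f x)%E) ->
  \int[mrestr mu mS]_(x in setT) f x = \int[mu]_(x in S) f x.
Proof.
move=> mf f0.
rewrite -(setUv S) ge0_integral_setU //; last 3 first.
- exact: measurableC.
- by rewrite setUv.
- by rewrite disj_set2E setICr.
rewrite (@null_set_integral _ _ _ (mrestr mu mS) (~` S)); last 3 first.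
- exact: measurableC.
- exact: measurable_funS mf.
- by change (mu (~` S `&` S) = 0); rewrite setICl measure0.
rewrite adde0; apply: eq_measure_integral => A mA AS.
by change (mu (A `&` S) = mu A); rewrite setIidl.
Qed.

Lemma int_scale_ge0 d (T : measurableType d) (R : realType)
  (mu : {measure set T -> \bar R}) (Y : T -> R) (mY : measurable_fun setT Y)
  (S1 S2 : set T) (m1 : measurable S1) (m2 : measurable S2) (c : {nonneg R})
  (h : forall B, measurable B ->
     mu (S1 `&` Y @^-1` B) = c%:num%:E * mu (S2 `&` Y @^-1` B))
  (g : R -> \bar R) (mg : measurable_fun setT g) (g0 : forall y, 0 <= g y) :
  \int[mu]_(x in S1) g (Y x) = c%:num%:E * \int[mu]_(x in S2) g (Y x).
Proof.
have mgY : measurable_fun setT (g \o Y) by exact: measurableT_comp.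
change (\int[mu]_(x in S1) (g \o Y) x = c%:num%:E * \int[mu]_(x in S2) (g \o Y) x).
have gY0 : forall x, 0 <= (g \o Y) x by move=> x; exact: g0.
rewrite -(int_restr mu m1 mgY gY0) -(int_restr mu m2 mgY gY0).
rewrite -ge0_integral_mscale //.
have E (m : {measure set T -> \bar R}) :
    \int[m]_(x in setT) (g \o Y) x = \int[pushforward m Y]_(y in setT) g y.
  by rewrite (ge0_integral_pushforward mY) // preimage_setT.
rewrite !E.
apply: eq_measure_integral => A mA _.
change (mu (Y @^-1` A `&` S1) = c%:num%:E * mu (Y @^-1` A `&` S2)).
by rewrite setIC h // setIC.
Qed.

Lemma int_scale d (T : measurableType d) (R : realType)
  (mu : {measure set T -> \bar R}) (Y : T -> R) (mY : measurable_fun setT Y)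
  (iY : mu.-integrable setT (EFin \o Y))
  (S1 S2 : set T) (m1 : measurable S1) (m2 : measurable S2) (c : {nonneg R})
  (h : forall B, measurable B ->
     mu (S1 `&` Y @^-1` B) = c%:num%:E * mu (S2 `&` Y @^-1` B)) :
  \int[mu]_(x in S1) (Y x)%:E = c%:num%:E * \int[mu]_(x in S2) (Y x)%:E.
Proof.
have mE : measurable_fun setT (@EFin R).
  by apply/(measurable_EFinP setT idfun); exact: measurable_id.
rewrite integralE [in RHS]integralE.
have -> : \int[mu]_(x in S1) (EFin \o Y)^\+ x
   = c%:num%:E * \int[mu]_(x in S2) (EFin \o Y)^\+ x.
  rewrite funepos_comp; apply: (int_scale_ge0 mY m1 m2 h (g := (@EFin R)^\+)) => //.
  exact: measurable_funepos.
have -> : \int[mu]_(x in S1) (EFin \o Y)^\- x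
   = c%:num%:E * \int[mu]_(x in S2) (EFin \o Y)^\- x.
  rewrite funeneg_comp; apply: (int_scale_ge0 mY m1 m2 h (g := (@EFin R)^\-)) => //.
  exact: measurable_funeneg.
have iS2 : mu.-integrable S2 (EFin \o Y) by apply: integrableS iY.
rewrite [RHS]muleBr //.
apply: fin_num_adde_defl; rewrite fin_numN.
exact: (integrable_fin_num m2 (integrable_funeneg m2 iS2)).
Qed.

Lemma mev d (T : measurableType d) (X : T -> bool) (mX : measurable_fun setT X)
  (b : bool) : measurable (ev X b).
Proof.
have := mX measurableT [set b] I; rewrite setTI; exact.
Qed.

Lemma prE d (T : measurableType d) (R : realType) (P : probability T R) S :
  measurable S -> P S = (pr P S)%:E.
Proof. by move=> mS; rewrite /pr fineK // fin_num_measure. Qed.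

Lemma pr_split d (T : measurableType d) (R : realType) (P : probability T R)
  (E : set T) (X : T -> bool) : measurable E -> measurable_fun setT X ->
  pr P E = (pr P (E `&` ev X true) + pr P (E `&` ev X false))%R.
Proof.
move=> mE mX.
have m1 : measurable (E `&` ev X true) by apply: measurableI => //; exact: mev.
have m0 : measurable (E `&` ev X false) by apply: measurableI => //; exact: mev.
have EE : E = (E `&` ev X true) `|` (E `&` ev X false).
  rewrite -setIUr; apply/seteqP; split => t /=.
    by move=> Et; split => //; rewrite /ev /=; case: (X t); [left|right].
  by case.
rewrite /pr {1}EE measureU //; last first.
  apply/seteqP; split => t //= [[_ h1] [_ h2]]; rewrite /ev /= in h1 h2; congruence.
by rewrite fineD // fin_num_measure.
Qed.

Definition Jf d (T : measurableType d) (R : realType) (P : probability T R)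
  (Y : T -> R) (S : set T) : R := fine (\int[P]_(x in S) (Y x)%:E).

Lemma J_split d (T : measurableType d) (R : realType) (P : probability T R)
  (Y : T -> R) (mY : measurable_fun setT Y) (iY : P.-integrable setT (EFin \o Y))
  (E : set T) (X : T -> bool) : measurable E -> measurable_fun setT X ->
  Jf P Y E = (Jf P Y (E `&` ev X true) + Jf P Y (E `&` ev X false))%R.
Proof.
move=> mE mX.
have m1 : measurable (E `&` ev X true) by apply: measurableI => //; exact: mev.
have m0 : measurable (E `&` ev X false) by apply: measurableI => //; exact: mev.
have EE : E = (E `&` ev X true) `|` (E `&` ev X false).
  rewrite -setIUr; apply/seteqP; split => t /=.
    by move=> Et; split => //; rewrite /ev /=; case: (X t); [left|right].
  by case.
rewrite /Jf {1}EE integral_setU //.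
2: by apply/measurable_EFinP; apply: measurable_funS mY => //; exact: measurableU.
2: by rewrite disj_set2E; apply/eqP/seteqP; split => t //= [[_ h1] [_ h2]]; rewrite /ev /= in h1 h2; congruence.
rewrite fineD //; apply: integrable_fin_num => //; exact: integrableS iY.
Qed.

Lemma int_fin d (T : measurableType d) (R : realType) (P : probability T R)
  (Y : T -> R) (iY : P.-integrable setT (EFin \o Y)) (S : set T) :
  measurable S -> \int[P]_(x in S) (Y x)%:E = (Jf P Y S)%:E.
Proof.
move=> mS; rewrite /Jf fineK //; apply: integrable_fin_num => //; exact: integrableS iY.
Qed.
Local Close Scope ereal_scope.

Lemma setI3_rev (U : Type) (X1 X2 X3 : set U) :
  X1 `&` X2 `&` X3 = X3 `&` X2 `&` X1.
Proof. by rewrite setIC (setIC X1 X2) setIA. Qed.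

Theorem theorem5 (d : measure_display) (T : measurableType d) (R : realType)
  (P : probability T R) (A C D : T -> bool) (Y : T -> R)
  (mA : measurable_fun setT A) (mC : measurable_fun setT C)
  (mD : measurable_fun setT D) (mY : measurable_fun setT Y)
  (iY : P.-integrable setT (EFin \o Y))
  (* p(A,C,D,Y) = p(C) p(D|C) p(A|C) p(Y|A,C) *)
  (fact : forall (x y z : bool) (B : set R), measurable B ->
     pr P (ev A x `&` ev C y `&` ev D z `&` Y @^-1` B)
     = pr P (ev C y) * cpr P (ev D z) (ev C y) * cpr P (ev A x) (ev C y)
       * cpr P (Y @^-1` B) (ev A x `&` ev C y))
  (pos : forall x y z : bool, 0 < pr P (ev A x `&` ev C y `&` ev D z))
  (pc : pr P (ev C true) = 2^-1)
  (pd1 : cpr P (ev D true) (ev C true) = cpr P (ev D false) (ev C false))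
  (pd2 : 2^-1 <= cpr P (ev D true) (ev C true))
  (pa1 : cpr P (ev A true) (ev C true) <= cpr P (ev A false) (ev C false))
  (pa2 : 2^-1 <= cpr P (ev A true) (ev C true))
  (hY1 : condE P Y (ev A true `&` ev C true) - condE P Y (ev A true `&` ev C false)
         <= condE P Y (ev A false `&` ev C false) - condE P Y (ev A false `&` ev C true))
  (hY2 : condE P Y (ev A false `&` ev C false) - condE P Y (ev A false `&` ev C true)
         <= 0) :
  RD_crude P A Y <= RD_true P A C Y /\ RD_true P A D Y <= RD_true P A C Y.
Proof.
have mAb := mev mA; have mCb := mev mC; have mDb := mev mD.
have mI := @measurableI _ T.
pose p x y z := pr P (ev A x `&` ev C y `&` ev D z).
pose J x y z := Jf P Y (ev A x `&` ev C y `&` ev D z).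
pose m x y := condE P Y (ev A x `&` ev C y).
have F_c y : pr P (ev C y) = p true y true + p true y false + (p false y true + p false y false).
  rewrite /p (pr_split P (mCb y) mA).
  rewrite (pr_split P (mI _ _ (mCb y) (mAb true)) mD).
  rewrite (pr_split P (mI _ _ (mCb y) (mAb false)) mD).
  by rewrite (setIC (ev C y) (ev A true)) (setIC (ev C y) (ev A false)).
have F_dc z y : pr P (ev D z `&` ev C y) = p true y z + p false y z.
  rewrite /p (pr_split P (mI _ _ (mDb z) (mCb y)) mA).
  by rewrite (setI3_rev (ev D z) (ev C y) (ev A true)) (setI3_rev (ev D z) (ev C y) (ev A false)).
have F_ac x y : pr P (ev A x `&` ev C y) = p x y true + p x y false.
  by rewrite /p (pr_split P (mI _ _ (mAb x) (mCb y)) mD).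
have F_a x : pr P (ev A x) = p x true true + p x true false + (p x false true + p x false false).
  by rewrite (pr_split P (mAb x) mC) !F_ac.
have F_ad x z : pr P (ev A x `&` ev D z) = p x true z + p x false z.
  rewrite /p (pr_split P (mI _ _ (mAb x) (mDb z)) mC).
  by rewrite (setIAC (ev A x) (ev D z) (ev C true)) (setIAC (ev A x) (ev D z) (ev C false)).
have F_d z : pr P (ev D z) = pr P (ev D z `&` ev C true) + pr P (ev D z `&` ev C false).
  exact: (pr_split P (mDb z) mC).
have F_T : 1 = pr P (ev C true) + pr P (ev C false).
  have := pr_split P (@measurableT _ T) mC; rewrite !setTI => <-.
  by rewrite /pr probability_setT.
have G_a x : Jf P Y (ev A x) = J x true true + J x true false + (J x false true + J x false false).
  rewrite /J (J_split mY iY (mAb x) mC).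
  rewrite (J_split mY iY (mI _ _ (mAb x) (mCb true)) mD).
  by rewrite (J_split mY iY (mI _ _ (mAb x) (mCb false)) mD).
have G_ad x z : Jf P Y (ev A x `&` ev D z) = J x true z + J x false z.
  rewrite /J (J_split mY iY (mI _ _ (mAb x) (mDb z)) mC).
  by rewrite (setIAC (ev A x) (ev D z) (ev C true)) (setIAC (ev A x) (ev D z) (ev C false)).
have pxy x y : 0 < pr P (ev A x `&` ev C y).
  by rewrite F_ac addr_gt0 // /p.
have pcy y : 0 < pr P (ev C y).
  by rewrite F_c !addr_gt0 // /p.
have K x y z : p x y z = pr P (ev C y) * cpr P (ev D z) (ev C y) * cpr P (ev A x) (ev C y).
  have := fact x y z setT measurableT.
  rewrite preimage_setT setIT /cpr setTI divff ?mulr1 //.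
  exact: lt0r_neq0.
have H_J x y z : J x y z = p x y z * m x y.
  have c0 : 0 <= p x y z / pr P (ev A x `&` ev C y).
    by apply: divr_ge0; apply: ltW; [exact: pos|exact: pxy].
  have mS := mI _ _ (mI _ _ (mAb x) (mCb y)) (mDb z).
  have mS2 := mI _ _ (mAb x) (mCb y).
  have h : forall B, measurable B ->
     (P (ev A x `&` ev C y `&` ev D z `&` Y @^-1` B) =
      (NngNum c0)%:num%:E * P (ev A x `&` ev C y `&` Y @^-1` B))%E.
    move=> B mB.
    have mYB : measurable (Y @^-1` B) by rewrite -[_ @^-1` _]setTI; exact: mY.
    rewrite !prE //; try exact: mI.
    rewrite -EFinM fact // -K /cpr /= (setIC (Y @^-1` B)).
    congr (_%:E); field; exact: lt0r_neq0.
  have := int_scale mY iY mS mS2 h.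
  rewrite /J /m /condE (int_fin iY mS) (int_fin iY mS2) /= => -[->].
  rewrite /Jf; field; exact: lt0r_neq0.
have cE S : condE P Y S = Jf P Y S / pr P S by [].
set al := cpr P (ev A true) (ev C true) in pa1 pa2 K.
set be := cpr P (ev A false) (ev C false) in pa1 K.
set q := cpr P (ev D true) (ev C true) in pd1 pd2 K.
have pc0 : pr P (ev C false) = 2^-1 by rewrite pc in F_T; lra.
have sA y : cpr P (ev A true) (ev C y) + cpr P (ev A false) (ev C y) = 1.
  rewrite /cpr !F_ac F_c; field.
  by rewrite -F_c; exact: lt0r_neq0.
have sD y : cpr P (ev D true) (ev C y) + cpr P (ev D false) (ev C y) = 1.
  rewrite /cpr !F_dc F_c; field.
  by rewrite -F_c; exact: lt0r_neq0.
have eA1 : cpr P (ev A false) (ev C true) = 1 - al by have := sA true; rewrite -/al; lra.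
have eA0 : cpr P (ev A true) (ev C false) = 1 - be by have := sA false; rewrite -/be; lra.
have eD1 : cpr P (ev D false) (ev C true) = 1 - q by have := sD true; rewrite -/q; lra.
have eD0 : cpr P (ev D true) (ev C false) = 1 - q by have := sD false; rewrite -pd1 -/q; lra.
have p111 : p true true true = 2^-1 * q * al by rewrite K pc.
have p110 : p true true false = 2^-1 * (1 - q) * al by rewrite K pc eD1.
have p011 : p false true true = 2^-1 * q * (1 - al) by rewrite K pc eA1.
have p010 : p false true false = 2^-1 * (1 - q) * (1 - al) by rewrite K pc eD1 eA1.
have p101 : p true false true = 2^-1 * (1 - q) * (1 - be) by rewrite K pc0 eD0 eA0.
have p100 : p true false false = 2^-1 * q * (1 - be) by rewrite K pc0 -pd1 eA0.
have p001 : p false false true = 2^-1 * (1 - q) * be by rewrite K pc0 eD0.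
have p000 : p false false false = 2^-1 * q * be by rewrite K pc0 -pd1.
have ps x y z : 0 < p x y z by exact: pos.
have h111 := ps true true true; have h011 := ps false true true.
have h110 := ps true true false; have h100 := ps true false false.
rewrite p111 in h111; rewrite p011 in h011; rewrite p110 in h110; rewrite p100 in h100.
have q0 : 0 < q by lra.
have q1 : q < 1 by nra.
have al0 : 0 < al by lra.
have al1 : al < 1 by nra.
have be0 : 0 < be by lra.
have be1 : be < 1 by nra.
have J_ x y z : J x y z = p x y z * m x y := H_J x y z.
rewrite /m in J_.
set m1 := condE P Y (ev A true `&` ev C true) in hY1 hY2 J_ *.
set m2 := condE P Y (ev A true `&` ev C false) in hY1 hY2 J_ *.
set m3 := condE P Y (ev A false `&` ev C true) in hY1 hY2 J_ *.
set m4 := condE P Y (ev A false `&` ev C false) in hY1 hY2 J_ *.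
have a1 : 0 < al + (1 - be) by lra.
have a2 : 0 < (1 - al) + be by lra.
have t1 : 0 < q * al by nra.
have t2 : 0 < (1 - q) * (1 - be) by nra.
have t3 : 0 < (1 - q) * al by nra.
have t4 : 0 < q * (1 - be) by nra.
have t5 : 0 < q * (1 - al) by nra.
have t6 : 0 < (1 - q) * be by nra.
have t7 : 0 < (1 - q) * (1 - al) by nra.
have t8 : 0 < q * be by nra.
have eT : RD_true P A C Y = (m1 + m2 - m3 - m4) / 2.
  by rewrite /RD_true pc pc0 -/m1 -/m2 -/m3 -/m4; field.
rewrite eT; split.
  rewrite /RD_crude (cE (ev A true)) (cE (ev A false)) !G_a !F_a !J_.
  rewrite p111 p110 p101 p100 p011 p010 p001 p000.
  rewrite -/m1 -/m2 -/m3 -/m4.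
  have := alg_crude al0 al1 be0 be1 pa2 pa1 hY1 hY2.
  move=> H; apply: (le_trans _ H); rewrite le_eqVlt; apply/orP; left; apply/eqP.
  by field; rewrite !gt_eqF.
rewrite /RD_true (cE (ev A true `&` ev D true)) (cE (ev A true `&` ev D false)).
rewrite (cE (ev A false `&` ev D true)) (cE (ev A false `&` ev D false)).
rewrite !G_ad !F_ad !J_ !F_d !F_dc.
rewrite p111 p110 p101 p100 p011 p010 p001 p000.
rewrite -/m1 -/m2 -/m3 -/m4.
have := alg_obs al0 al1 be0 be1 q0 q1 pa2 pa1 pd2 hY1 hY2.
move=> H; apply: (le_trans _ H); rewrite le_eqVlt; apply/orP; left; apply/eqP.
by field; rewrite !gt_eqF // !addr_gt0.
Qed.
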